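(* Consider a monopoly SP maximizing social welfare net of investment cost. (1) For a fixed small-cell density $\lambda>1$, the welfare-maximizing bandwidth split coincides with the revenue-maximizing one, $B_S=\frac{\epsilon N_fB}{\epsilon N_f+N_m}$, $B_M=\frac{N_mB}{\epsilon N_f+N_m}$ with $\epsilon=\lambda^{1/\alpha-1}$, with market-clearing prices. (2) Define $$W(\lambda)=\begin{cases}\frac{1}{1-\alpha}(BR_0)^{1-\alpha}(N_m+N_f)^{\alpha}-I_S\lambda, & 0\le\lambda\le 1,\\ \frac{1}{1-\alpha}(BR_0)^{1-\alpha}\big(N_m+\lambda^{\frac1\alpha-1}N_f\big)^{\alpha}-I_S\lambda, & \lambda>1.\end{cases}$$ Every maximizer $\lambda^{\mathrm{sw}}$ of $W$ over $[0,\infty)$ satisfies $\lambda^{\mathrm{sw}}=0$ or $\lambda^{\mathrm{sw}}=\lambda^*$ where $\lambda^*>1$ solves $$N_f(BR_0)^{1-\alpha}(\lambda^* )^{\frac1\alpha-2}\big(N_f(\lambda^* )^{\frac1\alpha-1}+N_m\big)^{\alpha-1}=I_S.$$ (3) If $\lambda^{\mathrm{sw}}$ is a maximizer of $W$ and $\lambda^{\mathrm{rev}}$ is a maximizer of $S$ (defined in the context) with $\lambda^{\mathrm{sw}}>1$ and $\lambda^{\mathrm{rev}}>1$, then $\lambda^{\mathrm{sw}}>\lambda^{\mathrm{rev}}$.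
   Context: Parameters: $\alpha\in(0,1)$; densities $N_m,N_f>0$ of mobile and fixed users; spectral efficiency $R_0>0$; bandwidth $B>0$; cost $I_S>0$ per unit small-cell density. Utility $u(r)=\frac{r^{1-\alpha}}{1-\alpha}$. For fixed density $\lambda$ and split $(B_M,B_S)$ with $B_M+B_S=B$, mobile users are served by macro-cells and fixed users by small-cells at market-clearing prices, giving welfare $N_m u(B_MR_0/N_m)+N_f u(\lambda B_SR_0/N_f)-I_S\lambda$ and revenue $R_0B_M(B_MR_0/N_m)^{-\alpha}+R_0\lambda B_S(\lambda B_SR_0/N_f)^{-\alpha}-I_S\lambda$; for $\lambda\le1$ all bandwidth is used in macro-cells serving all $N_m+N_f$ users. The revenue (net of investment) under the optimal split is $$S(\lambda)=\begin{cases}(BR_0)^{1-\alpha}(N_m+N_f)^{\alpha}-I_S\lambda, & 0\le\lambda\le 1,\\ (BR_0)^{1-\alpha}\big(N_m+\lambda^{\frac1\alpha-1}N_f\big)^{\alpha}-I_S\lambda, & \lambda>1,\end{cases}$$ and $W(\lambda)$ in the claim is the corresponding net social welfare. *)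

(* Defs.v *)
From Stdlib Require Import Reals Lra.
Open Scope R_scope.

(* Real power with the convention 0^y = 0 (used only with y <> 0 at x = 0,
   matching the limits r^(1-a) -> 0 and r * r^(-a) -> 0 as r -> 0+). *)
Definition rpow (x y : R) : R :=
  if Rlt_dec 0 x then Rpower x y else 0.

Definition util (alpha r : R) : R := rpow r (1 - alpha) / (1 - alpha).

(* Net social welfare for density lam > 1 and split (BM, BS):
   mobile users served by macro-cells, fixed users by small-cells. *)
Definition welfare_split (alpha Nm Nf R0 IS lam BM BS : R) : R :=
  Nm * util alpha (BM * R0 / Nm) + Nf * util alpha (lam * BS * R0 / Nf) - IS * lam.

(* Revenue (net of investment) at market-clearing prices. *)
Definition revenue_split (alpha Nm Nf R0 IS lam BM BS : R) : R :=
  R0 * BM * rpow (BM * R0 / Nm) (- alpha)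
  + R0 * lam * BS * rpow (lam * BS * R0 / Nf) (- alpha) - IS * lam.

Definition split_ok (B BM BS : R) : Prop := 0 <= BM /\ 0 <= BS /\ BM + BS = B.

Definition is_max_split (B : R) (f : R -> R -> R) (BM BS : R) : Prop :=
  split_ok B BM BS /\ forall BM' BS', split_ok B BM' BS' -> f BM' BS' <= f BM BS.

Definition is_max_nonneg (f : R -> R) (x : R) : Prop :=
  0 <= x /\ forall y, 0 <= y -> f y <= f x.

(* Net social welfare W(lam) under the optimal split. *)
Definition W (alpha Nm Nf R0 B IS lam : R) : R :=
  if Rle_dec lam 1
  then / (1 - alpha) * Rpower (B * R0) (1 - alpha) * Rpower (Nm + Nf) alpha - IS * lam
  else / (1 - alpha) * Rpower (B * R0) (1 - alpha)
         * Rpower (Nm + Rpower lam (/ alpha - 1) * Nf) alpha - IS * lam.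

(* Revenue S(lam) under the optimal split. *)
Definition S (alpha Nm Nf R0 B IS lam : R) : R :=
  if Rle_dec lam 1
  then Rpower (B * R0) (1 - alpha) * Rpower (Nm + Nf) alpha - IS * lam
  else Rpower (B * R0) (1 - alpha)
         * Rpower (Nm + Rpower lam (/ alpha - 1) * Nf) alpha - IS * lam.

(* Main.v *)
Require Import Defs.
From Stdlib Require Import Reals Lra.
Open Scope R_scope.
Lemma Rpow_pos x y : 0 < Rpower x y.
Proof. unfold Rpower; apply exp_pos. Qed.

Lemma Rpow_dec a b q : q < 0 -> 0 < a -> a < b -> Rpower b q < Rpower a q.
Proof.
  intros Hq Ha Hab. unfold Rpower. apply exp_increasing.
  pose proof (ln_increasing a b Ha Hab). nra.
Qed.

Lemma tangent_strict p x x0 : 0 < p < 1 -> 0 < x -> 0 < x0 -> x <> x0 ->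
  Rpower x p < Rpower x0 p + p * Rpower x0 (p - 1) * (x - x0).
Proof.
  intros Hp Hx Hx0 Hne.
  destruct (Rlt_or_le x x0) as [Hlt|Hle].
  - destruct (MVT_cor2 (fun t => Rpower t p) (fun t => p * Rpower t (p-1)) x x0 Hlt)
      as [c [Hc1 Hc2]].
    { intros c Hc. apply derivable_pt_lim_power. lra. }
    simpl in Hc1.
    assert (Rpower x0 (p-1) < Rpower c (p-1)) by (apply Rpow_dec; lra).
    assert (0 < p * (Rpower c (p-1) - Rpower x0 (p-1))) by (apply Rmult_lt_0_compat; lra).
    assert (0 < p * (Rpower c (p-1) - Rpower x0 (p-1)) * (x0 - x)) by (apply Rmult_lt_0_compat; lra).
    nra.
  - assert (Hlt : x0 < x) by lra.
    destruct (MVT_cor2 (fun t => Rpower t p) (fun t => p * Rpower t (p-1)) x0 x Hlt)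
      as [c [Hc1 Hc2]].
    { intros c Hc. apply derivable_pt_lim_power. lra. }
    simpl in Hc1.
    assert (Rpower c (p-1) < Rpower x0 (p-1)) by (apply Rpow_dec; lra).
    assert (0 < p * (Rpower x0 (p-1) - Rpower c (p-1))) by (apply Rmult_lt_0_compat; lra).
    assert (0 < p * (Rpower x0 (p-1) - Rpower c (p-1)) * (x - x0)) by (apply Rmult_lt_0_compat; lra).
    nra.
Qed.

Lemma tangent_zero p x0 : 0 < p < 1 -> 0 < x0 ->
  0 < Rpower x0 p + p * Rpower x0 (p - 1) * (0 - x0).
Proof.
  intros Hp Hx0.
  assert (E : Rpower x0 (p-1) * x0 = Rpower x0 p).
  { rewrite <- (Rpower_1 x0) at 2 by lra. rewrite <- Rpower_plus. f_equal; ring. }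
  pose proof (Rpow_pos x0 p). nra.
Qed.

Lemma rpow_pos_eq x y : 0 < x -> rpow x y = Rpower x y.
Proof. intros H; unfold rpow; destruct (Rlt_dec 0 x); [reflexivity| lra]. Qed.

Lemma rpow_zero x y : x = 0 -> rpow x y = 0.
Proof. intros H; unfold rpow; destruct (Rlt_dec 0 x); [lra| reflexivity]. Qed.

Lemma tang_rpow_lt p x x0 : 0 < p < 1 -> 0 <= x -> 0 < x0 -> x <> x0 ->
  rpow x p < Rpower x0 p + p * Rpower x0 (p - 1) * (x - x0).
Proof.
  intros Hp Hx Hx0 Hne. destruct (Rle_lt_or_eq_dec 0 x Hx) as [Hx'|Hx'].
  - rewrite rpow_pos_eq by lra. apply tangent_strict; lra.
  - subst x. rewrite rpow_zero by reflexivity. apply tangent_zero; lra.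
Qed.

Lemma tang_rpow_le p x x0 : 0 < p < 1 -> 0 <= x -> 0 < x0 ->
  rpow x p <= Rpower x0 p + p * Rpower x0 (p - 1) * (x - x0).
Proof.
  intros Hp Hx Hx0. destruct (Req_dec x x0) as [E|E].
  - subst. rewrite rpow_pos_eq by lra. lra.
  - left; apply tang_rpow_lt; lra.
Qed.

Lemma max_split_char B (F G : R -> R -> R) a b c d : 0 < c ->
  (forall BM BS, split_ok B BM BS -> F BM BS = c * G BM BS + d) ->
  split_ok B a b ->
  (forall BM BS, split_ok B BM BS -> BM <> a -> G BM BS < G a b) ->
  forall BM BS, is_max_split B F BM BS <-> (BM = a /\ BS = b).
Proof.
  intros Hc HF Hab HG BM BS. split.
  - intros [Hok Hmax]. destruct (Req_dec BM a) as [E|E].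
    + destruct Hok as [_ [_ H1]]; destruct Hab as [_ [_ H2]]. split; lra.
    + exfalso. pose proof (HG BM BS Hok E). pose proof (Hmax a b Hab).
      rewrite (HF _ _ Hok), (HF _ _ Hab) in *. nra.
  - intros [-> ->]. split; [exact Hab|]. intros BM' BS' Hok.
    destruct (Req_dec BM' a) as [E|E].
    + destruct Hok as [_ [_ H1]]; destruct Hab as [_ [_ H2]].
      assert (BS' = b) by lra. subst. lra.
    + pose proof (HG BM' BS' Hok E).
      rewrite (HF _ _ Hok), (HF _ _ Hab). nra.
Qed.

Lemma rev_term alpha R0 N t : 0 < R0 -> 0 <= t -> 0 < N ->
  R0 * t * rpow (t * R0 / N) (- alpha) = N * rpow (t * R0 / N) (1 - alpha).
Proof.
  intros HR Ht HN. destruct (Rle_lt_or_eq_dec 0 t Ht) as [Ht'|Ht'].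
  - assert (Hu : 0 < t * R0 / N) by (apply Rdiv_lt_0_compat; nra).
    rewrite !rpow_pos_eq by lra.
    replace (1 - alpha) with (1 + - alpha) by ring. rewrite Rpower_plus, Rpower_1 by lra.
    field. lra.
  - subst t. rewrite !rpow_zero by (field; lra). ring.
Qed.

Section P1.
Variables alpha Nm Nf R0 B IS lam : R.
Hypotheses (Halpha0 : 0 < alpha) (Halpha1 : alpha < 1)
  (HNm : 0 < Nm) (HNf : 0 < Nf) (HR0 : 0 < R0) (HB : 0 < B) (HIS : 0 < IS) (Hlam : 1 < lam).

Let eps := Rpower lam (/ alpha - 1).
Let D := eps * Nf + Nm.
Let p := 1 - alpha.
Definition Gs BM BS := Nm * rpow (BM * R0 / Nm) (1 - alpha) + Nf * rpow (lam * BS * R0 / Nf) (1 - alpha).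

Lemma eps_pos : 0 < eps. Proof. apply Rpow_pos. Qed.
Lemma D_pos : 0 < D. Proof. pose proof eps_pos. unfold D. nra. Qed.

Lemma cand_ok : split_ok B (Nm * B / D) (eps * Nf * B / D).
Proof.
  pose proof eps_pos; pose proof D_pos. unfold split_ok. split; [|split].
  - apply Rlt_le, Rdiv_lt_0_compat; nra.
  - apply Rlt_le, Rdiv_lt_0_compat; [|lra]. apply Rmult_lt_0_compat; nra.
  - unfold D; field; unfold D in *; lra.
Qed.

Lemma key_id : Rpower (Nm * B / D * R0 / Nm) (p - 1)
   = lam * Rpower (lam * (eps * Nf * B / D) * R0 / Nf) (p - 1).
Proof.
  pose proof eps_pos; pose proof D_pos.
  set (x0 := Nm * B / D * R0 / Nm).
  assert (Hx0 : 0 < x0) by (unfold x0; apply Rdiv_lt_0_compat; [|lra];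
     apply Rmult_lt_0_compat; [apply Rdiv_lt_0_compat|]; nra).
  replace (lam * (eps * Nf * B / D) * R0 / Nf) with ((lam * eps) * x0)
    by (unfold x0; field; lra).
  assert (Hle : lam * eps = Rpower lam (/ alpha)).
  { unfold eps. rewrite <- (Rpower_1 lam) at 1 by lra. rewrite <- Rpower_plus. f_equal; ring. }
  rewrite <- Rpower_mult_distr by nra. rewrite Hle, Rpower_mult.
  replace (/ alpha * (p - 1)) with (- (1)) by (unfold p; field; lra).
  rewrite Rpower_Ropp, Rpower_1 by lra. field. lra.
Qed.

Lemma G_strict BM BS : split_ok B BM BS -> BM <> Nm * B / D ->
  Gs BM BS < Gs (Nm * B / D) (eps * Nf * B / D).
Proof.
  intros [H1 [H2 H3]] Hne. pose proof eps_pos; pose proof D_pos.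
  pose proof key_id as K.
  set (x0 := Nm * B / D * R0 / Nm) in *.
  set (y0 := lam * (eps * Nf * B / D) * R0 / Nf) in *.
  assert (Hx0 : 0 < x0).
  { unfold x0; apply Rdiv_lt_0_compat; [|lra].
     apply Rmult_lt_0_compat; [apply Rdiv_lt_0_compat|]; [apply Rmult_lt_0_compat| |]; assumption. }
  assert (Hy0 : 0 < y0).
  { unfold y0; apply Rdiv_lt_0_compat; [|lra].
     apply Rmult_lt_0_compat; [|lra]; apply Rmult_lt_0_compat; [lra|].
     apply Rdiv_lt_0_compat; [|assumption]. apply Rmult_lt_0_compat; [|assumption].
     apply Rmult_lt_0_compat; assumption. }
  assert (Hx : 0 <= BM * R0 / Nm) by (apply Rmult_le_pos; [nra| left; apply Rinv_0_lt_compat; lra]).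
  assert (Hy : 0 <= lam * BS * R0 / Nf) by (apply Rmult_le_pos; [apply Rmult_le_pos; nra| left; apply Rinv_0_lt_compat; lra]).
  assert (Hxne : BM * R0 / Nm <> x0).
  { intro E; apply Hne. unfold x0 in E. apply (Rmult_eq_reg_r (R0 / Nm)).
    - replace (BM * (R0/Nm)) with (BM * R0 / Nm) by (field; lra). rewrite E. field. split; lra.
    - apply Rgt_not_eq, Rdiv_lt_0_compat; lra. }
  assert (Hp : 0 < p < 1) by (unfold p; lra).
  pose proof (tang_rpow_lt p _ x0 Hp Hx Hx0 Hxne) as T1.
  pose proof (tang_rpow_le p _ y0 Hp Hy Hy0) as T2.
  unfold Gs. fold p. rewrite (rpow_pos_eq x0), (rpow_pos_eq y0) by lra.
  assert (E1 : Nm * (BM * R0 / Nm - x0) = R0 * (BM - Nm * B / D)) by (unfold x0; field; lra).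
  assert (E2 : Nf * (lam * BS * R0 / Nf - y0) = - lam * R0 * (BM - Nm * B / D)).
  { unfold y0. replace BS with (B - BM) by lra. unfold D in *. field. split; lra. }
  assert (Z : Nm * (p * Rpower x0 (p - 1) * (BM * R0 / Nm - x0))
            + Nf * (p * Rpower y0 (p - 1) * (lam * BS * R0 / Nf - y0)) = 0).
  { transitivity (p * Rpower x0 (p-1) * (Nm * (BM * R0 / Nm - x0))
       + p * Rpower y0 (p-1) * (Nf * (lam * BS * R0 / Nf - y0))).
    - ring.
    - rewrite E1, E2, K. ring. }
  nra.
Qed.

End P1.

Definition gfun c a Nm Nf IS e x := c * Rpower (Nm + Rpower x e * Nf) a - IS * x.

Lemma gder c a Nm Nf IS e x : 0 < x -> 0 < Nm -> 0 < Nf ->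
  derivable_pt_lim (gfun c a Nm Nf IS e) x
    (c * (a * Rpower (Nm + Rpower x e * Nf) (a - 1) * (e * Rpower x (e - 1) * Nf)) - IS * 1).
Proof.
  intros Hx HNm HNf.
  assert (H1 : derivable_pt_lim (fun x => Nm + Rpower x e * Nf) x (0 + e * Rpower x (e - 1) * Nf)).
  { apply (derivable_pt_lim_plus (fun _ => Nm) (fun x => Rpower x e * Nf)).
    - apply derivable_pt_lim_const.
    - apply (derivable_pt_lim_scal_right (fun x => Rpower x e)). apply derivable_pt_lim_power; lra. }
  rewrite Rplus_0_l in H1.
  assert (H2 : derivable_pt_lim (comp (fun y => Rpower y a) (fun x => Nm + Rpower x e * Nf)) x
     (a * Rpower (Nm + Rpower x e * Nf) (a - 1) * (e * Rpower x (e - 1) * Nf))).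
  { apply derivable_pt_lim_comp; [exact H1|]. apply derivable_pt_lim_power.
    pose proof (Rpow_pos x e). nra. }
  apply (derivable_pt_lim_minus (fun x => c * comp (fun y => Rpower y a) (fun x => Nm + Rpower x e * Nf) x) (fun x => IS * x)).
  - apply (derivable_pt_lim_scal (comp (fun y => Rpower y a) (fun x => Nm + Rpower x e * Nf))). exact H2.
  - apply (derivable_pt_lim_scal id). apply derivable_pt_lim_id.
Qed.

Lemma foc c a Nm Nf IS e l : 0 < Nm -> 0 < Nf -> 1 < l ->
  (forall y, 1 < y -> gfun c a Nm Nf IS e y <= gfun c a Nm Nf IS e l) ->
  c * (a * Rpower (Nm + Rpower l e * Nf) (a - 1) * (e * Rpower l (e - 1) * Nf)) - IS = 0.
Proof.
  intros HNm HNf Hl Hmax.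
  pose proof (gder c a Nm Nf IS e l ltac:(lra) HNm HNf) as Hd.
  pose (pr := exist (fun L => derivable_pt_lim (gfun c a Nm Nf IS e) l L) _ Hd : derivable_pt (gfun c a Nm Nf IS e) l).
  pose proof (deriv_maximum (gfun c a Nm Nf IS e) 1 (l + 1) l pr Hl ltac:(lra)
     (fun y H1 H2 => Hmax y H1)) as Z.
  rewrite (derive_pt_eq_0 _ _ _ pr Hd) in Z. lra.
Qed.

Lemma h_incr a Nm Nf e x y : 0 < a -> 0 < e -> 0 < Nm -> 0 < Nf -> 0 < x -> x < y ->
  Rpower (Nm + Rpower x e * Nf) a < Rpower (Nm + Rpower y e * Nf) a.
Proof.
  intros Ha He HNm HNf Hx Hxy. apply Rlt_Rpower_l; [lra|].
  assert (Rpower x e < Rpower y e).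
  { unfold Rpower. apply exp_increasing. pose proof (ln_increasing x y Hx Hxy). nra. }
  pose proof (Rpow_pos x e). split; nra.
Qed.

Theorem theorem7 (alpha Nm Nf R0 B IS : R)
  (Halpha0 : 0 < alpha) (Halpha1 : alpha < 1)
  (HNm : 0 < Nm) (HNf : 0 < Nf) (HR0 : 0 < R0) (HB : 0 < B) (HIS : 0 < IS) :
  (forall lam : R, 1 < lam ->
     let eps := Rpower lam (/ alpha - 1) in
     forall BM BS : R,
       (is_max_split B (welfare_split alpha Nm Nf R0 IS lam) BM BS <->
          (BM = Nm * B / (eps * Nf + Nm) /\ BS = eps * Nf * B / (eps * Nf + Nm))) /\
       (is_max_split B (revenue_split alpha Nm Nf R0 IS lam) BM BS <->
          (BM = Nm * B / (eps * Nf + Nm) /\ BS = eps * Nf * B / (eps * Nf + Nm)))) /\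
  (forall lsw : R, is_max_nonneg (W alpha Nm Nf R0 B IS) lsw ->
     lsw = 0 \/
     (1 < lsw /\
      Nf * Rpower (B * R0) (1 - alpha) * Rpower lsw (/ alpha - 2)
         * Rpower (Nf * Rpower lsw (/ alpha - 1) + Nm) (alpha - 1) = IS)) /\
  (forall lsw lrev : R,
     is_max_nonneg (W alpha Nm Nf R0 B IS) lsw ->
     is_max_nonneg (S alpha Nm Nf R0 B IS) lrev ->
     1 < lsw -> 1 < lrev -> lrev < lsw).
Proof.
  set (K := Rpower (B * R0) (1 - alpha)).
  assert (HK : 0 < K) by apply Rpow_pos.
  set (e := / alpha - 1).
  assert (He : 0 < e).
  { unfold e. assert (1 < / alpha). { rewrite <- Rinv_1. apply Rinv_lt_contravar; lra. } lra. }
  assert (HWg : forall y, 1 < y -> W alpha Nm Nf R0 B IS y = gfun (/ (1 - alpha) * K) alpha Nm Nf IS e y).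
  { intros y Hy. unfold W, gfun. destruct (Rle_dec y 1); [lra| reflexivity]. }
  assert (HSg : forall y, 1 < y -> S alpha Nm Nf R0 B IS y = gfun K alpha Nm Nf IS e y).
  { intros y Hy. unfold S, gfun. destruct (Rle_dec y 1); [lra| reflexivity]. }
  assert (Hc : K < / (1 - alpha) * K).
  { assert (1 < / (1 - alpha)). { rewrite <- Rinv_1. apply Rinv_lt_contravar; lra. } nra. }
  split; [|split].
  - intros lam Hlam eps BM BS. split.
    + apply (max_split_char B _ (Gs alpha Nm Nf R0 lam) _ _ (/ (1 - alpha)) (- IS * lam)).
      * apply Rinv_0_lt_compat; lra.
      * intros BM' BS' _. unfold welfare_split, util, Gs. field. lra.
      * apply cand_ok; assumption.
      * intros BM' BS' Hok Hne. apply G_strict; assumption.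
    + apply (max_split_char B _ (Gs alpha Nm Nf R0 lam) _ _ 1 (- IS * lam)).
      * lra.
      * intros BM' BS' [H1 [H2 _]]. unfold revenue_split, Gs.
        rewrite (rev_term alpha R0 Nm BM') by lra.
        replace (R0 * lam * BS') with (R0 * (lam * BS')) by ring.
        rewrite (rev_term alpha R0 Nf (lam * BS')) by nra. ring.
      * apply cand_ok; assumption.
      * intros BM' BS' Hok Hne. apply G_strict; assumption.
  - intros lsw [H0 Hmax].
    destruct (Rle_lt_dec lsw 1) as [Hle|Hgt].
    + destruct (Rle_lt_or_eq_dec 0 lsw H0) as [Hpos|Heq]; [|left; lra].
      exfalso. pose proof (Hmax 0 (Rle_refl 0)) as Z. unfold W in Z.
      destruct (Rle_dec 0 1); [|lra]. destruct (Rle_dec lsw 1); [|lra]. nra.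
    + right. split; [exact Hgt|].
      assert (F := foc (/ (1 - alpha) * K) alpha Nm Nf IS e lsw HNm HNf Hgt).
      assert (Z : / (1 - alpha) * K * (alpha * Rpower (Nm + Rpower lsw e * Nf) (alpha - 1)
          * (e * Rpower lsw (e - 1) * Nf)) - IS = 0).
      { apply F. intros y Hy. rewrite <- !HWg by lra. apply Hmax. lra. }
      replace (e - 1) with (/ alpha - 2) in Z by (unfold e; ring).
      replace (Nm + Rpower lsw e * Nf) with (Nf * Rpower lsw e + Nm) in Z by ring.
      fold K. fold e.
      assert (Hce : / (1 - alpha) * (alpha * e) = 1) by (unfold e; field; lra).
      set (P := Rpower (Nf * Rpower lsw e + Nm) (alpha - 1)) in *.
      set (Q := Rpower lsw (/ alpha - 2)) in *.
      transitivity ((/ (1 - alpha) * (alpha * e)) * (Nf * K * Q * P)).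
      * rewrite Hce; ring.
      * lra.
  - intros lsw lrev [Hw0 Hw] [Hs0 Hs] Hsw Hrev.
    destruct (Rlt_or_le lrev lsw) as [Hlt|Hge]; [exact Hlt|exfalso].
    destruct (Rle_lt_or_eq_dec lsw lrev Hge) as [Hlt|Heq].
    + pose proof (h_incr alpha Nm Nf e lsw lrev Halpha0 He HNm HNf ltac:(lra) Hlt) as Hh.
      pose proof (Hw lrev ltac:(lra)) as Z1. pose proof (Hs lsw ltac:(lra)) as Z2.
      rewrite !HWg in Z1 by lra. rewrite !HSg in Z2 by lra. unfold gfun in Z1, Z2.
      assert (0 < (/ (1 - alpha) * K - K) * (Rpower (Nm + Rpower lrev e * Nf) alpha
               - Rpower (Nm + Rpower lsw e * Nf) alpha)) by (apply Rmult_lt_0_compat; lra).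
      nra.
    + subst lrev.
      assert (Z1 := foc (/ (1 - alpha) * K) alpha Nm Nf IS e lsw HNm HNf Hsw).
      assert (Z2 := foc K alpha Nm Nf IS e lsw HNm HNf Hsw).
      assert (A1 : forall y, 1 < y -> gfun (/ (1 - alpha) * K) alpha Nm Nf IS e y <=
                   gfun (/ (1 - alpha) * K) alpha Nm Nf IS e lsw).
      { intros y Hy. rewrite <- !HWg by lra. apply Hw. lra. }
      assert (A2 : forall y, 1 < y -> gfun K alpha Nm Nf IS e y <= gfun K alpha Nm Nf IS e lsw).
      { intros y Hy. rewrite <- !HSg by lra. apply Hs. lra. }
      specialize (Z1 A1). specialize (Z2 A2).
      set (Dv := alpha * Rpower (Nm + Rpower lsw e * Nf) (alpha - 1) * (e * Rpower lsw (e - 1) * Nf)) in *.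
      assert (0 < Dv).
      { unfold Dv. pose proof (Rpow_pos (Nm + Rpower lsw e * Nf) (alpha - 1)).
        pose proof (Rpow_pos lsw (e - 1)).
        apply Rmult_lt_0_compat; apply Rmult_lt_0_compat; try apply Rmult_lt_0_compat; lra. }
      assert (0 < (/ (1 - alpha) * K - K) * Dv) by (apply Rmult_lt_0_compat; lra).
      nra.
Qed.
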